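(* Let $G$ be a finite simple graph with $n$ vertices that has an efficient dominating set. Then $\mathcal{C}^{min}(G)=n-\gamma(G)$.
   Context: A set $D\subseteq V(G)$ is a dominating set of $G$ if every vertex of $V(G)\setminus D$ has a neighbor in $D$; $\gamma(G)$ is the minimum cardinality of a dominating set, and dominating sets of that cardinality are called $\gamma$-sets. A dominating set $D$ is efficient if every vertex of $V(G)\setminus D$ is adjacent to exactly one vertex of $D$ and no vertex of $D$ is adjacent to another vertex of $D$. For $D\subseteq V(G)$, $\mathcal{C}_D(G)=\sum_{u\in D}\deg_G(u)$, and $\mathcal{C}^{min}(G)=\min\{\mathcal{C}_D(G): D \text{ a } \gamma\text{-set of } G\}$. *)

(* Defs.v *)
From mathcomp Require Import all_boot.
Set Implicit Arguments. Unset Strict Implicit. Unset Printing Implicit Defensive.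

Section Dom.
Variables (T : finType) (e : rel T).

Definition simple_graph := symmetric e /\ irreflexive e.

Definition N (u : T) : {set T} := [set v | e u v].
Definition deg (u : T) : nat := #|N u|.

Definition dominating (D : {set T}) : bool :=
  [forall v, (v \notin D) ==> [exists u in D, e v u]].

Definition efficient_dominating (D : {set T}) : bool :=
  dominating D &&
  [forall v, (v \notin D) ==> (#|[set u in D | e v u]| == 1)] &&
  [forall u in D, forall w in D, ~~ e u w].

Lemma dominating_exists : exists k, [exists D : {set T}, dominating D && (#|D| == k)].
Proof.
exists #|[set: T]|; apply/existsP; exists [set: T]; rewrite eqxx andbT.
by apply/forallP => v; rewrite in_setT.
Qed.

Definition gamma : nat := ex_minn dominating_exists.

Definition gamma_set (D : {set T}) : bool := dominating D && (#|D| == gamma).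

Definition cost (D : {set T}) : nat := \sum_(u in D) deg u.

Lemma gamma_set_exists : exists c, [exists D : {set T}, gamma_set D && (cost D == c)].
Proof.
rewrite /gamma_set /gamma; case: ex_minnP => m /existsP [D /andP [HD HDm]] _.
by exists (cost D); apply/existsP; exists D; rewrite HD HDm eqxx.
Qed.

Definition Cmin : nat := ex_minn gamma_set_exists.
End Dom.

(* Main.v *)
Require Import Defs.
From mathcomp Require Import all_boot.
Set Implicit Arguments. Unset Strict Implicit. Unset Printing Implicit Defensive.

Lemma double_count (T : finType) (A S : {set T}) (F : T -> {set T}) :
  \sum_(v in A) #|[set s in S | v \in F s]| = \sum_(s in S) #|A :&: F s|.
Proof.
have E1 : forall v, #|[set s in S | v \in F s]| = \sum_(s in S) (v \in F s : nat).
  move=> v; rewrite -big_mkcondr /= -sum1_card; apply: eq_bigl => s.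
  by rewrite inE.
have E2 : forall s, #|A :&: F s| = \sum_(v in A) (v \in F s : nat).
  move=> s; rewrite -big_mkcondr /= -sum1_card; apply: eq_bigl => v.
  by rewrite inE.
rewrite (eq_bigr _ (fun v _ => E1 v)) (eq_bigr _ (fun s _ => E2 s)).
exact: exchange_big.
Qed.

Section G.
Variables (T : finType) (e : rel T).
Hypothesis Hs : symmetric e.
Hypothesis Hi : irreflexive e.

Definition Nc (u : T) : {set T} := u |: N e u.

Lemma in_Nc v s : (v \in Nc s) = (v == s) || e s v.
Proof. by rewrite !inE. Qed.

Lemma card_Nc u : #|Nc u| = (deg e u).+1.
Proof. by rewrite /Nc cardsU1 inE Hi. Qed.

Lemma dom_cover (S : {set T}) v : dominating e S ->
  0 < #|[set s in S | v \in Nc s]|.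
Proof.
move=> /forallP /(_ v); case: (boolP (v \in S)) => vS /=.
  by move=> _; apply/card_gt0P; exists v; rewrite !inE vS eqxx.
move=> /existsP [u /andP [uS evu]]; apply/card_gt0P; exists u.
by rewrite !inE uS Hs evu orbT.
Qed.

Lemma eff_cover (D : {set T}) v : efficient_dominating e D ->
  #|[set s in D | v \in Nc s]| = 1.
Proof.
move=> /andP [/andP [_ /forallP H1] /forallP H2].
case: (boolP (v \in D)) => vD.
  rewrite -(cards1 v); apply: eq_card => s; rewrite !inE.
  case: (eqVneq s v) => [-> | ns]; first by rewrite vD ?eqxx.
  rewrite /=; apply/negbTE; apply/negP => /andP [sD esv].
  by move: (H2 s); rewrite sD => /forallP /(_ v); rewrite vD esv.
move: (H1 v); rewrite vD /= => /eqP <-; apply: eq_card => s.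
rewrite !inE; case: (boolP (s \in D)) => //= sD.
by rewrite (Hs s v); case: (eqVneq v s) => [vs|//]; subst; rewrite sD in vD.
Qed.

Lemma eff_small (D : {set T}) s : efficient_dominating e D ->
  #|D :&: Nc s| <= 1.
Proof.
move=> /andP [/andP [_ /forallP H1] /forallP H2].
case: (boolP (s \in D)) => sD.
  rewrite -(cards1 s); apply: subset_leq_card; apply/subsetP => v.
  rewrite !inE => /andP [vD /orP [//|esv]].
  by move: (H2 s); rewrite sD => /forallP /(_ v); rewrite vD esv.
move: (H1 s); rewrite sD /= => /eqP <-; apply: subset_leq_card.
apply/subsetP => v; rewrite !inE => /andP [vD /orP [/eqP vs|->]].
  by subst; rewrite vD in sD.
by rewrite vD.
Qed.

Lemma dom_lower (S : {set T}) : dominating e S -> #|T| <= cost e S + #|S|.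
Proof using Hs Hi.
move=> HS.
have -> : cost e S + #|S| = \sum_(s in S) #|Nc s|.
  rewrite /cost -sum1_card -big_split /=; apply: eq_bigr => s _.
  by rewrite card_Nc addn1.
apply: leq_trans (_ : \sum_(s in S) #|[set: T] :&: Nc s| <= _).
  rewrite -double_count -cardsT -sum1_card; apply: leq_sum => v _; exact: dom_cover.
by apply: leq_sum => s _; rewrite setTI.
Qed.

Lemma eff_exact (D : {set T}) : efficient_dominating e D -> #|T| = cost e D + #|D|.
Proof using Hs Hi.
move=> HD.
have -> : cost e D + #|D| = \sum_(s in D) #|Nc s|.
  rewrite /cost -sum1_card -big_split /=; apply: eq_bigr => s _.
  by rewrite card_Nc addn1.
rewrite (eq_bigr (fun s => #|[set: T] :&: Nc s|)); last by move=> s _; rewrite setTI.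
rewrite -double_count -cardsT -sum1_card; apply: eq_bigr => v _.
by rewrite eff_cover.
Qed.

Lemma eff_le (D S : {set T}) : efficient_dominating e D -> dominating e S ->
  #|D| <= #|S|.
Proof using Hs Hi.
move=> HD HS.
apply: leq_trans (_ : \sum_(v in D) #|[set s in S | v \in Nc s]| <= _).
  rewrite -sum1_card; apply: leq_sum => v _; exact: dom_cover.
rewrite double_count -sum1_card; apply: leq_sum => s _; exact: eff_small.
Qed.
End G.

Theorem mainTheorem3 (T : finType) (e : rel T) :
  simple_graph e ->
  (exists D : {set T}, efficient_dominating e D) ->
  Cmin e = #|T| - gamma e.
Proof.
move=> [Hs Hi] [D HD].
have Ddom : dominating e D by case/andP: HD => /andP [].
have Dg : #|D| = gamma e.
  rewrite /gamma; case: ex_minnP => m /existsP [S /andP [HS /eqP <-]] Hmin.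
  apply/eqP; rewrite eqn_leq (eff_le Hs Hi HD HS) /=.
  apply: Hmin; apply/existsP; exists D; by rewrite Ddom eqxx.
have Dc := eff_exact Hs Hi HD.
rewrite /Cmin; case: ex_minnP => c /existsP [S /andP [/andP [HS /eqP Sg] /eqP <-]] Hmin.
apply/eqP; rewrite eqn_leq; apply/andP; split.
  rewrite Dc -Dg addnK; apply: Hmin; apply/existsP; exists D.
  by rewrite /gamma_set Ddom Dg !eqxx.
by rewrite leq_subLR addnC -Sg; apply: dom_lower.
Qed.
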